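(* Let $p$ be a prime and $\lambda$ a partition with $r(\lambda)=(r_1,\ldots,r_{p-1})$. Suppose $p\nmid|\lambda|$ and there exist distinct $a,c\in\{1,\ldots,p-1\}$ with $r_a=r_c=\max r(\lambda)$. Then $c^{(p)}_\lambda\neq0$.
   Context: A composition is a finite sequence $\delta=(\delta_1,\ldots,\delta_s)$ of positive integers, $\ell(\delta)=s$, $|\delta|=\sum_i\delta_i$; a partition is a composition with weakly decreasing parts. Partial sums $\delta^+_j=\sum_{i=1}^j\delta_i$. $n_d(\delta)$ is the number of parts of $\delta$ equal to $d$. A composition is $p'$-cumulative if it is nonempty and $p\nmid\delta^+_j$ for all $1\le j\le\ell(\delta)$. $c^{(p)}_\lambda$ is the number of $p'$-cumulative compositions that are rearrangements of $\lambda$. For $1\le j\le p-1$, $r_j(\lambda)=\sum_{i\equiv j\,(\mathrm{mod}\ p)}n_i(\lambda)$, $r(\lambda)=(r_1(\lambda),\ldots,r_{p-1}(\lambda))$, and $\max r(\lambda)$ is its largest entry. *)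

(* Defs.v *)
From mathcomp Require Import all_boot.
Set Implicit Arguments. Unset Strict Implicit. Unset Printing Implicit Defensive.

Definition is_composition (d : seq nat) : bool := all (fun x => 0 < x) d.
Definition is_partition (l : seq nat) : bool :=
  is_composition l && sorted geq l.

Definition psum (d : seq nat) (j : nat) : nat := sumn (take j d).

Definition nparts (d : seq nat) (x : nat) : nat := count_mem x d.

Definition pcumulative (p : nat) (d : seq nat) : bool :=
  (d != [::]) && all (fun j => ~~ (p %| psum d j)) (iota 1 (size d)).

Definition cp (p : nat) (l : seq nat) : nat :=
  count (pcumulative p) (undup (permutations l)).

Definition rj (p : nat) (l : seq nat) (j : nat) : nat :=
  \sum_(0 <= i < (sumn l).+1 | i %% p == j %% p) nparts l i.

Definition maxr (p : nat) (l : seq nat) : nat :=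
  \max_(1 <= j < p) rj p l j.

(* Main.v *)
Require Import Defs.
From mathcomp Require Import all_boot zify.

Fixpoint okfrom (p t : nat) (s : seq nat) : bool :=
  if s is x :: s' then ~~ (p %| t + x) && okfrom p (t + x) s' else true.

Lemma okfromE p t s :
  okfrom p t s = all (fun j => ~~ (p %| t + psum s j)) (iota 1 (size s)).
Proof.
elim: s t => [|x s IH] t //=.
rewrite /psum /= IH.
have -> : iota 2 (size s) = map (addn 1) (iota 1 (size s)) by rewrite -iotaDl.
rewrite all_map take0 addn0; congr (_ && _); apply: eq_all => j /=.
by rewrite /psum /= addnA.
Qed.

Lemma okfrom_cat p t a b :
  okfrom p t (a ++ b) = okfrom p t a && okfrom p (t + sumn a) b.
Proof.
elim: a t => [|x a IH] t /=; first by rewrite addn0.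
by rewrite IH addnA andbA.
Qed.

Lemma okfrom_zeros p t s : ~~ (p %| t) -> all (fun x => p %| x) s -> okfrom p t s.
Proof.
elim: s t => [|x s IH] t //= Ht /andP [Hx Hs].
by rewrite dvdn_addl // Ht /= IH // dvdn_addl.
Qed.

Lemma okfrom_shift p t k s : p %| k -> okfrom p (t + k) s = okfrom p t s.
Proof.
move=> Hk; elim: s t => [|x s IH] t //=.
rewrite -addnA (addnC k) addnA IH.
by rewrite (addnC (t + x) k) dvdn_addr.
Qed.

Lemma dvd_sumn p s : all (fun x => p %| x) s -> p %| sumn s.
Proof. by elim: s => //= x s IH /andP [H1 H2]; rewrite dvdn_add // IH. Qed.

Lemma count_disj2 (T : Type) (a b c : pred T) s :
  (forall x, ~~ (a x && b x)) -> (forall x, a x || b x -> c x) ->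
  count a s + count b s <= count c s.
Proof.
move=> H1 H2; elim: s => //= x s IH.
move: (H1 x) (H2 x); case: (a x); case: (b x); case: (c x) => //= _ H; try (by move: (H isT)); lia.
Qed.

Lemma inner_sum P x N :
  \sum_(0 <= i < N | P i) ((x == i) : nat) = P x && (x < N).
Proof.
rewrite big_mkcond /=.
elim: N => [|N IH]; first by rewrite big_geq // andbF.
rewrite big_nat_recr //= IH.
case: (ltngtP x N) => H.
- by rewrite ltnS (ltnW H); case: (P N); case: (P x).
- by rewrite ltnS leqNgt H; case: (P N); case: (P x).
- by subst x; rewrite ltnS leqnn; case: (P N).
Qed.

Lemma sum_count N P l : all (fun x => x < N) l ->
  \sum_(0 <= i < N | P i) count_mem i l = count P l.
Proof.
elim: l => [|x l IH] /=.
  by move=> _; rewrite big1.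
move=> /andP [Hx Hl].
by rewrite big_split /= inner_sum IH // Hx andbT.
Qed.

Lemma rjE p l j : rj p l j = count (fun x => x %% p == j %% p) l.
Proof.
rewrite /rj /nparts sum_count //.
apply/allP => x Hx; rewrite ltnS.
elim: l Hx => //= y l IH; rewrite in_cons => /orP [/eqP -> | /IH H].
  exact: leq_addr.
exact: leq_trans H (leq_addl _ _).
Qed.

Definition cl (p y : nat) := fun x => x %% p == y %% p.

Lemma modeq p t x y : p %| t + x -> p %| t + y -> x %% p = y %% p.
Proof.
move=> Hx Hy; apply/eqP; rewrite -(eqn_modDl t).
by move: Hx Hy; rewrite /dvdn => /eqP -> /eqP ->.
Qed.

Lemma disj p s y z : z %% p != y %% p ->
  count (cl p z) s + count (cl p y) s <= size s.
Proof.
move=> H; rewrite -count_predT; apply: count_disj2 => // x.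
rewrite /cl; apply/negP => /andP [/eqP -> /eqP E]; by rewrite E eqxx in H.
Qed.

Lemma key p : 0 < p -> forall n s t, size s = n ->
  all (fun x => x %% p != 0) s -> ~~ (p %| t + sumn s) ->
  (forall y, 2 * count (cl p y) s <= n.+1) ->
  exists2 s', perm_eq s s' & okfrom p t s'.
Proof.
move=> p0; elim/ltn_ind => n IH s t Hn Hall Hsum Hcnt.
have [->|sne] := eqVneq s [::]; first by exists [::].
have Hdisj : forall y z, z %% p != y %% p ->
    count (cl p z) s + count (cl p y) s <= n by move=> y z H; rewrite -Hn disj.
case: (boolP (has (fun y => n < 2 * count (cl p y) s) s)).
- move/hasP => [y ys Hy].
  have Hy2 : 2 * count (cl p y) s = n.+1 by apply/eqP; rewrite eqn_leq Hcnt Hy.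
  case: (boolP (p %| t + y)) => Hty.
  + have [v vs Hv] : exists2 v, v \in s & v %% p != y %% p.
      case: (boolP (has (fun v => v %% p != y %% p) s)) => [/hasP//|Hno].
      have Hc : count (cl p y) s = n.
        rewrite -Hn; apply/eqP; rewrite -all_count; apply/allP => v vs.
        by move/hasPn: Hno => /(_ v vs); rewrite negbK.
      have n1 : n = 1 by lia.
      move: Hn ys Hsum; rewrite n1.
      case: (s) => [|w [|]] //= _; rewrite mem_seq1 => /eqP E.
      by rewrite -E addn0 Hty.
    have yv : y \in rem v s.
      move: ys; rewrite (perm_mem (perm_to_rem vs)) in_cons.
      case/orP => [/eqP E|//]; by rewrite E eqxx in Hv.
    set rest := rem y (rem v s).
    have Hp : perm_eq s (v :: y :: rest).
      apply: perm_trans (perm_to_rem vs) _; rewrite perm_cons; exact: perm_to_rem yv.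
    have Hsz : n = (size (rest : seq nat)).+2 by rewrite -Hn (perm_size Hp).
    have Hsumr : sumn s = v + (y + sumn rest) by rewrite (perm_sumn Hp).
    have [s2 Hp2 Hok] : exists2 s2, perm_eq rest s2 & okfrom p (t + v + y) s2.
      apply: (IH (size (rest : seq nat))) => //; first lia.
    * by move: Hall; rewrite (perm_all _ Hp) => /and3P [].
    * by have -> : t + v + y + sumn rest = t + sumn s by rewrite Hsumr; lia.
    * move=> z; have := permP Hp (cl p z); rewrite /= /cl.
      case: (eqVneq (z %% p) (y %% p)) => Hz.
      - rewrite Hz (negbTE Hv) => Hc.
        move: Hy2; rewrite /cl => Hy2'; move: Hc Hy2'; rewrite /nat_of_bool; set a := count _ s; set b := count _ rest => Hc Hy2'; lia.
      - move=> Hc; have := Hdisj y z Hz; move: Hy2; rewrite /cl => Hy2' H1.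
        case: (v %% p == z %% p) Hc => /= Hc; lia.
    exists (v :: y :: s2); first by apply: perm_trans Hp _; rewrite !perm_cons.
    rewrite /= Hok andbT; apply/andP; split.
    * apply/negP => H; move: Hv; by rewrite (@modeq _ _ _ _ H Hty) eqxx.
    * rewrite addnAC dvdn_addr //; exact: (allP Hall v vs).
  + set rest := rem y s.
    have Hp : perm_eq s (y :: rest) := perm_to_rem ys.
    have Hsz : n = (size (rest : seq nat)).+1 by rewrite -Hn (perm_size Hp).
    have Hsumr : sumn s = y + sumn rest by rewrite (perm_sumn Hp).
    have [s2 Hp2 Hok] : exists2 s2, perm_eq rest s2 & okfrom p (t + y) s2.
      apply: (IH (size (rest : seq nat))) => //; first lia.
    * by move: Hall; rewrite (perm_all _ Hp) => /andP [].
    * by rewrite -addnA -Hsumr.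
    * move=> z; have := permP Hp (cl p z); rewrite /= /cl.
      case: (eqVneq (z %% p) (y %% p)) => Hz.
      - rewrite Hz => Hc.
        move: Hy2; rewrite /cl => Hy2'; lia.
      - move=> Hc; have := Hdisj y z Hz; move: Hy2; rewrite /cl => Hy2' H1.
        lia.
    exists (y :: s2); first by apply: perm_trans Hp _; rewrite perm_cons.
    by rewrite /= Hok Hty.
- move=> Hno.
  have Hb : forall z, 2 * count (cl p z) s <= n.
    move=> z; case: (boolP (has (cl p z) s)) => [/hasP [w ws Hw] | H0].
    + have -> : count (cl p z) s = count (cl p w) s.
        by apply: eq_count => u; rewrite /cl (eqP Hw).
      by move/hasPn: Hno => /(_ w ws); rewrite -leqNgt.
    + by move: H0; rewrite has_count lt0n negbK => /eqP ->.
  case: (boolP (has (fun x => ~~ (p %| t + x)) s)) => [/hasP [x xs Hx] | Hall0].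
  + set rest := rem x s.
    have Hp : perm_eq s (x :: rest) := perm_to_rem xs.
    have Hsz : n = (size (rest : seq nat)).+1 by rewrite -Hn (perm_size Hp).
    have Hsumr : sumn s = x + sumn rest by rewrite (perm_sumn Hp).
    have [s2 Hp2 Hok] : exists2 s2, perm_eq rest s2 & okfrom p (t + x) s2.
      apply: (IH (size (rest : seq nat))) => //; first lia.
    * by move: Hall; rewrite (perm_all _ Hp) => /andP [].
    * by rewrite -addnA -Hsumr.
    * move=> z; have := permP Hp (cl p z); rewrite /= => Hc.
      have := Hb z; case: (cl p z x) Hc => /= Hc; lia.
    exists (x :: s2); first by apply: perm_trans Hp _; rewrite perm_cons.
    by rewrite /= Hok Hx.
  + exfalso; case Es: s sne => [|x0 s0] // _.
    have x0s : x0 \in s by rewrite Es mem_head.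
    have Hc : count (cl p x0) s = n.
      rewrite -Hn; apply/eqP; rewrite -all_count; apply/allP => v vs.
      move/hasPn: Hall0 => Ha.
      have := Ha v vs; have := Ha x0 x0s; rewrite !negbK => H1 H2.
      by rewrite /cl (@modeq _ _ _ _ H2 H1).
    have := Hb x0; rewrite Hc; move: Hn; rewrite Es /= => Hn; lia.
Qed.

Theorem mainTheorem5 (p : nat) (l : seq nat) (a c : nat) :
  prime p -> is_partition l -> ~~ (p %| sumn l) ->
  0 < a < p -> 0 < c < p -> a != c ->
  rj p l a = maxr p l -> rj p l c = maxr p l ->
  cp p l != 0.
Proof.
move=> pp _ ndvd /andP [a0 ap] /andP [c0 cp'] ac Ha Hc.
have p0 := prime_gt0 pp.
pose A := (fun x => x %% p != 0).
pose nz := filter A l. pose zs := filter (predC A) l.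
have Hpl : perm_eq (nz ++ zs) l by apply/permPl; exact: perm_filterC.
have Hsl : sumn l = sumn nz + sumn zs by rewrite -sumn_cat (perm_sumn Hpl).
have Hzsa : all (fun x => p %| x) zs.
  by apply/allP => x; rewrite mem_filter /= /A negbK => /andP [H _].
have Hzs : p %| sumn zs by apply: dvd_sumn.
have Hnz : ~~ (p %| 0 + sumn nz) by rewrite add0n; move: ndvd; rewrite Hsl dvdn_addl.
have Hcount : forall y, 2 * count (cl p y) nz <= (size nz).+1.
  move=> y; rewrite count_filter size_filter.
  case: (eqVneq (y %% p) 0) => Hy0.
  - have -> : count (predI (cl p y) A) l = 0.
      rewrite (@eq_count _ _ pred0) ?count_pred0 // => x /=.
      by rewrite /cl /A Hy0; case: eqP.
    by [].
  - have E : count (predI (cl p y) A) l = rj p l (y %% p).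
      rewrite rjE modn_mod; apply: eq_count => x /=; rewrite /cl /A.
      by case: eqP => //= ->; rewrite Hy0.
    have Hmax : rj p l (y %% p) <= maxr p l.
      rewrite /maxr (bigD1_seq (y %% p)) /=.
      + exact: leq_maxl.
      + by rewrite mem_index_iota lt0n Hy0 ltn_pmod.
      + exact: iota_uniq.
    have Hac : rj p l a + rj p l c <= count A l.
      rewrite !rjE; apply: count_disj2 => x.
      + apply/negP => /andP [/eqP H1 /eqP H2]; move: ac.
        by rewrite -(modn_small ap) -(modn_small cp') -H1 -H2 eqxx.
      + rewrite /A => /orP [] /eqP ->; rewrite modn_small // -lt0n //.
    rewrite E; lia.
have Hall : all A nz by apply: filter_all.
have [s' Hp' Hok] := @key p p0 _ nz 0 (erefl (size nz)) Hall Hnz Hcount.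
case: s' Hp' Hok => [|y rest] Hp' Hok.
  by move: Hnz; rewrite (perm_sumn Hp') dvdn0.
pose d := y :: zs ++ rest.
have Hd : perm_eq d l.
  have H1 : perm_eq d ((y :: rest) ++ zs) by rewrite /d /= perm_cons perm_catC.
  have H2 : perm_eq ((y :: rest) ++ zs) (nz ++ zs) by rewrite perm_cat2r perm_sym.
  exact: perm_trans H1 (perm_trans H2 Hpl).
have Hpc : pcumulative p d.
  rewrite /pcumulative; apply/andP; split => //.
  rewrite (@eq_all _ _ (fun j => ~~ (p %| 0 + psum d j))); last by move=> j; rewrite add0n.
  rewrite -okfromE /d /=.
  move: Hok => /= /andP [Hy Hr].
  by rewrite Hy okfrom_cat okfrom_zeros // okfrom_shift.
rewrite /cp -lt0n -has_count; apply/hasP; exists d => //.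
by rewrite mem_undup mem_permutations.
Qed.
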